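(* Let $(x_k)_{k\ge0}$ be indeterminates, define $a_n=x_n$ if $n=2^k-1$ for some integer $k\ge0$ and $a_n=0$ otherwise, and let $d(n)=\det\left(a_{i+j}\right)_{i,j=0}^{n-1}$ and $D(n)=\det\left(a_{i+j+1}\right)_{i,j=0}^{n-1}$, with $d(0)=D(0)=1$. Then for all $n\ge0$, $$\frac{d(n)\,d(n+1)}{D(n)^2}=(-1)^n x_0.$$ *)

(* Defs.v *)
From HB Require Import structures.
From mathcomp Require Import all_boot all_order all_algebra.
From mathcomp Require Import mpoly.
Set Implicit Arguments. Unset Strict Implicit. Unset Printing Implicit Defensive.
Import GRing.Theory.
Local Open Scope ring_scope.

(* n is of the form 2^k - 1 for some k >= 0, i.e. n+1 = 2^k (k <= n+1 suffices). *)
Definition is_pow2m1 (n : nat) : bool := [exists k : 'I_n.+2, n.+1 == 2 ^ k]%N.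

(* The indeterminate x_k in the polynomial ring Z[x_0,...,x_{m-1}]
   (only indices k < m are ever used below). *)
Definition xv (m k : nat) : {mpoly int[m]} :=
  if @insub nat (fun k => k < m)%N _ k is Some i then 'X_i else 0.

Definition aseq (m n : nat) : {mpoly int[m]} := if is_pow2m1 n then xv m n else 0.

Definition hd (m n : nat) : {mpoly int[m]} :=
  \det (\matrix_(i < n, j < n) aseq m (i + j)%N).
Definition hD (m n : nat) : {mpoly int[m]} :=
  \det (\matrix_(i < n, j < n) aseq m (i + j).+1).

(* Main.v *)
Require Import Defs.
From HB Require Import structures.
From mathcomp Require Import all_boot all_order all_algebra.
From mathcomp Require Import fingroup perm mpoly zify ring.
From Stdlib Require Import Lia.
Import GRing.Theory.
Local Open Scope ring_scope.

Definition Jmx (R : pzRingType) (s : nat) : 'M[R]_s := \matrix_(i, j) ((i + j == s.-1)%N%:R).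

Lemma detJS (R : comPzRingType) t : \det (Jmx R t.+1) = (-1) ^+ t * \det (Jmx R t).
Proof.
rewrite (expand_det_row _ ord0) (bigD1 ord_max) //= big1 ?addr0; last first.
  move=> j /negPf Hj; rewrite /Jmx mxE /= add0n.
  have -> : (j == t :> nat) = false by apply/negP => /eqP H; move: Hj; rewrite -(inj_eq val_inj) /= H eqxx.
  by rewrite mul0r.
rewrite /Jmx mxE /= add0n eqxx mul1r /cofactor /= add0n; congr (_ * _).
congr (\det _); apply/matrixP => i j; rewrite !mxE /= /bump /=.
have -> : (t <= j)%N = false by apply/negbTE; rewrite -ltnNge ltn_ord.
rewrite add0n; case: t i j => [|t] i j; first by case: i.
by rewrite /= add1n eqSS.
Qed.

Lemma perm_split n p (N : nat) (sg : 'S_n) :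
  (N = p + n - 1)%N -> (p <= n)%N ->
  (forall i : 'I_n, (i + sg i = N)%N \/ (2 * (i + sg i) < N)%N) ->
  (forall i : 'I_n, (p <= i)%N -> (sg i = N - i :> nat)%N) /\
  (forall i : 'I_n, (i < p)%N -> (sg i < p)%N).
Proof.
move=> HN Hpn H.
have A : forall i : 'I_n, (p <= i)%N -> (sg i = N - i :> nat)%N.
  move=> i Hi.
  have [Hbig|Hsmall] := leqP N (2 * i).
    by case: (H i) => Hs; lia.
  have Hj : (N - i < n)%N by have := ltn_ord i; lia.
  pose j := Ordinal Hj.
  pose r := ((sg^-1)%g j).
  have Hr : sg r = j by rewrite permKV.
  have Hri : r = i.
    apply/val_inj => /=.
    case: (H r); rewrite Hr /=; lia.
  by rewrite -{1}Hri Hr.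
split => // i Hi.
rewrite ltnNge; apply/negP => Hs.
have Hj : (N - sg i < n)%N by have := ltn_ord (sg i); lia.
pose r := Ordinal Hj.
have Hpr : (p <= r)%N by rewrite /=; have := ltn_ord (sg i); lia.
have := A r Hpr; rewrite /= => E.
have E2 : sg r = sg i by apply/val_inj; move: E; rewrite /=; have := ltn_ord (sg i); lia.
have := perm_inj E2 => Eri.
by move: Hpr; rewrite Eri leqNgt Hi.
Qed.

Lemma det_split (R : comPzRingType) p s (M : 'M[R]_(p + s)) (x : R) :
  (forall i j : 'I_(p + s), M i j != 0 ->
     (i + j = p + (p + s) - 1)%N \/ (2 * (i + j) < p + (p + s) - 1)%N) ->
  (forall i j : 'I_(p + s), (p <= i)%N -> (i + j = p + (p + s) - 1)%N -> M i j = x) ->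
  \det M = \det (ulsubmx M) * (x ^+ s * \det (Jmx R s)).
Proof.
move=> H1 H2.
set N := (p + (p + s) - 1)%N.
pose M' := block_mx (ulsubmx M) 0 0 (x *: Jmx R s).
have M'E : forall i j : 'I_(p + s), M' i j =
   if (i < p)%N && (j < p)%N then M i j
   else if (p <= i)%N && (p <= j)%N && (i + j == N)%N then x else 0.
  move=> i j; rewrite /M' -[i]splitK -[j]splitK.
  case: (split i) => a; case: (split j) => b /=.
  - by rewrite block_mxEul !mxE /= !ltn_ord.
  - rewrite block_mxEur !mxE /= ltn_ord /=.
    have -> : (p + b < p)%N = false by lia.
    have -> : (p <= a)%N = false by have := ltn_ord a; lia.
    by [].
  - rewrite block_mxEdl !mxE /=.
    have -> : (p + a < p)%N = false by lia.
    have -> : (p <= b)%N = false by have := ltn_ord b; lia.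
    by rewrite andbF.
  - rewrite block_mxEdr !mxE /=.
    have -> : (p + a < p)%N = false by lia.
    have -> : (p <= p + a)%N by lia.
    have -> : (p <= p + b)%N by lia.
    rewrite /N; have := ltn_ord a; have := ltn_ord b => ha hb.
    have -> : (p + a + (p + b) == p + (p + s) - 1)%N = (a + b == s.-1)%N by apply/eqP/eqP; lia.
    by case: eqP => _; rewrite ?mulr1 ?mulr0.
have -> : \det M = \det M'.
  rewrite /determinant; apply: eq_bigr => sg _; congr (_ * _).
  case: (boolP [forall i, M i (sg i) != 0]) => [/forallP H | /forallPn [i /negPn /eqP Hi]].
    have Hc : forall i : 'I_(p + s), (i + sg i = N)%N \/ (2 * (i + sg i) < N)%N.
      by move=> i; apply: H1; apply: H.
    have [A B] := @perm_split _ p N sg (erefl _) (leq_addr _ _) Hc.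
    apply: eq_bigr => i _; rewrite M'E.
    case: (ltnP i p) => Hip /=.
      by rewrite B.
    have Hs := A i Hip.
    have -> : (p <= sg i)%N by rewrite Hs /N; have := ltn_ord i; lia.
    have -> : (i + sg i == N)%N by apply/eqP; rewrite Hs /N; have := ltn_ord i; lia.
    by rewrite /= (H2 i (sg i) Hip) // Hs /N; have := ltn_ord i; lia.
  rewrite (bigD1 i) //= Hi mul0r (bigD1 i) //= M'E.
  case: ifP => _; first by rewrite Hi mul0r.
  case: ifP => [/andP [/andP [Hp _] /eqP HN]|_]; last by rewrite mul0r.
  by rewrite -(H2 i (sg i) Hp HN) Hi mul0r.
by rewrite det_ublock detZ.
Qed.

Lemma pow2_split t K : is_pow2m1 t -> (t.+1 < 2 ^ K.+1)%N ->
  t.+1 = (2 ^ K)%N \/ (2 * t.+1 <= 2 ^ K)%N.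
Proof.
move=> /existsP [k /eqP Hk] Ht.
have hk : (k <= K)%N by rewrite -ltnS -(ltn_exp2l _ _ (isT : (1 < 2)%N)) -Hk.
case: (ltngtP k K) => [lt|gt|eq].
- right; have : (2 ^ k.+1 <= 2 ^ K)%N by rewrite leq_exp2l.
  by rewrite expnS -Hk.
- by move: hk; rewrite leqNgt gt.
- by left; rewrite Hk eq.
Qed.

Lemma pow2m1_pow K : is_pow2m1 (2 ^ K - 1).
Proof.
have h1 : (0 < 2 ^ K)%N by rewrite expn_gt0.
have h2 : (K < 2 ^ K)%N by rewrite ltn_expl.
apply/existsP.
have hK : (K < (2 ^ K - 1).+2)%N by lia.
exists (Ordinal hK); apply/eqP => /=; lia.
Qed.

Lemma hd_split m p s K : (2 ^ K = p + p + s)%N -> (0 < s)%N ->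
  hd m (p + s) = hd m p * (xv m (2 ^ K - 1) ^+ s * \det (Jmx _ s)).
Proof.
move=> HK Hs.
rewrite /hd (@det_split _ _ _ _ (xv m (2 ^ K - 1))).
- congr (\det _ * _); apply/matrixP => i j; rewrite !mxE /=; done.
- move=> i j; rewrite mxE /aseq; case: ifP => [H _|]; last by rewrite eqxx.
  have := ltn_ord i; have := ltn_ord j => hi hj.
  have Hlt : ((i + j).+1 < 2 ^ K.+1)%N by rewrite expnS HK; lia.
  by case: (@pow2_split _ _ H Hlt) => h; [left|right]; lia.
- move=> i j _ Hij; rewrite mxE /aseq.
  have -> : (i + j = 2 ^ K - 1)%N by lia.
  by rewrite pow2m1_pow.
Qed.

Lemma hD_split m p s K : (2 ^ K = p + p + s + 1)%N -> (0 < s)%N ->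
  hD m (p + s) = hD m p * (xv m (2 ^ K - 1) ^+ s * \det (Jmx _ s)).
Proof.
move=> HK Hs.
rewrite /hD (@det_split _ _ _ _ (xv m (2 ^ K - 1))).
- congr (\det _ * _); apply/matrixP => i j; rewrite !mxE /=; done.
- move=> i j; rewrite mxE /aseq; case: ifP => [H _|]; last by rewrite eqxx.
  have := ltn_ord i; have := ltn_ord j => hi hj.
  have Hlt : ((i + j).+2 < 2 ^ K.+1)%N by rewrite expnS HK; lia.
  by case: (@pow2_split _ _ H Hlt) => h; [left|right]; lia.
- move=> i j _ Hij; rewrite mxE /aseq.
  have -> : ((i + j).+1 = 2 ^ K - 1)%N by lia.
  by rewrite pow2m1_pow.
Qed.

Lemma xv_neq0 m k : (k < m)%N -> xv m k != 0.
Proof.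
move=> hk; rewrite /xv; case: insubP => [i _ _|/negP //].
apply/eqP => h; have : (('X_i : {mpoly int[m]})@_U_(i) = (i == i)%:R) := mcoeffXU _ i i; rewrite h mcoeff0 eqxx.
by move/eqP; rewrite eq_sym oner_eq0.
Qed.

Lemma Jsq (R : comPzRingType) s : \det (Jmx R s) ^+ 2 = 1.
Proof.
elim: s => [|s IH]; first by rewrite det_mx00 expr1n.
by rewrite detJS exprMn sqrr_sign IH mulr1.
Qed.

Lemma Jodd (R : comPzRingType) t : \det (Jmx R t.*2) * \det (Jmx R t.*2.+2) = -1.
Proof.
rewrite !detJS.
have -> : forall a b c : R, a * (b * (c * a)) = a ^+ 2 * (b * c) by move=> a b c; rewrite expr2; ring.
rewrite Jsq mul1r -exprD addSn -signr_odd /= oddD odd_double /=.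
by rewrite expr1.
Qed.

Lemma hd1 m : hd m 1 = xv m 0.
Proof. by rewrite /hd det_mx11 mxE /aseq (pow2m1_pow 0). Qed.

Lemma main m n : (2 * n < m)%N ->
  hD m n != 0 /\ hd m n * hd m n.+1 = (-1) ^+ n * xv m 0 * hD m n ^+ 2.
Proof.
elim/ltn_ind: n => n IH hm.
case: n IH hm => [|n0] IH hm.
  have h0 : hd m 0 = 1 by rewrite /hd det_mx00.
  have h0' : hD m 0 = 1 by rewrite /hD det_mx00.
  by rewrite h0 h0' hd1 oner_eq0 expr0 expr1n !mul1r mulr1.
set n := n0.+1.
set K := trunc_log 2 (2 * n).
have [hK1 hK2] : (2 ^ K <= 2 * n)%N /\ (2 * n < 2 ^ K.+1)%N.
  have hb : (0 < 2 * n)%N by rewrite /n; lia.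
  by have /andP [] := trunc_log_bounds (isT : (1 < 2)%N) hb.
have hK3 : (n < 2 ^ K)%N by move: hK2; rewrite expnS; lia.
set p := (2 ^ K - n - 1)%N.
set t := ((n - p - 1) %/ 2)%N.
have ht : (n = p + t.*2.+1)%N.
  rewrite /t -muln2. have : (2 ^ K <= 2 * n)%N by []. rewrite /p.
  have h := divn_eq (n - (2 ^ K - n - 1) - 1) 2.
  have h2 : ((n - (2 ^ K - n - 1) - 1) %% 2 = 0)%N.
    apply/eqP; rewrite -/(dvdn 2 _).
    have -> : (n - (2 ^ K - n - 1) - 1 = 2 * n - 2 ^ K)%N by lia.
    apply: dvdn_sub; first exact: dvdn_mulr.
    case: (K) hK3 => [|k] hk; last by rewrite expnS dvdn_mulr.
    by move: hk; rewrite expn0 /n.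
  lia.
have hp : (p < n)%N by lia.
have h2p : (2 * p < m)%N by lia.
have [IHn IHe] := IH p hp h2p.
set x := xv m (2 ^ K - 1).
have HD : hD m n = hD m p * (x ^+ t.*2.+1 * \det (Jmx _ t.*2.+1)).
  have := @hD_split m p t.*2.+1 K _ isT; rewrite -ht; apply; lia.
have Hd1 : hd m n.+1 = hd m p * (x ^+ t.*2.+2 * \det (Jmx _ t.*2.+2)).
  have := @hd_split m p t.*2.+2 K _ isT; rewrite (_ : (p + t.*2.+2)%N = n.+1); last by lia.
  apply; lia.
have Hd0 : hd m n = hd m p.+1 * (x ^+ t.*2 * \det (Jmx _ t.*2)).
  case: (posnP t) => [t0|tp].
    by rewrite t0 /= expr0 det_mx00 !mulr1 ht t0 addn1.
  have := @hd_split m p.+1 t.*2 K _ _; rewrite (_ : (p.+1 + t.*2)%N = n); last by lia.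
  apply; lia.
have hx : x != 0 by apply: xv_neq0; lia.
have hJ : forall s, \det (Jmx {mpoly int[m]} s) != 0.
  by move=> s; apply/eqP => h; have := Jsq {mpoly int[m]} s; rewrite h expr0n /= => /eqP; rewrite eq_sym oner_eq0.
split.
  by rewrite HD !mulf_neq0 // expf_neq0.
rewrite Hd0 Hd1 HD.
have -> : hd m p.+1 * (x ^+ t.*2 * \det (Jmx _ t.*2)) * (hd m p * (x ^+ t.*2.+2 * \det (Jmx _ t.*2.+2)))
   = (hd m p * hd m p.+1) * (x ^+ t.*2 * x ^+ t.*2.+2) * (\det (Jmx {mpoly int[m]} t.*2) * \det (Jmx _ t.*2.+2)) by ring.
rewrite IHe Jodd -exprD.
have -> : (t.*2 + t.*2.+2 = (t.*2.+1) * 2)%N by lia.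
rewrite exprM.
have -> : (-1) ^+ n * xv m 0 * (hD m p * (x ^+ t.*2.+1 * \det (Jmx {mpoly int[m]} t.*2.+1))) ^+ 2
  = (-1) ^+ n * xv m 0 * hD m p ^+ 2 * (x ^+ t.*2.+1) ^+ 2 * \det (Jmx {mpoly int[m]} t.*2.+1) ^+ 2 by ring.
rewrite Jsq ht exprD -[(-1) ^+ t.*2.+1]signr_odd /= odd_double /= expr1.
ring.
Qed.

Theorem lemma5p8 (n m : nat) (hm : (2 * n < m)%N) :
  hD m n != 0 /\ hd m n * hd m n.+1 = (-1) ^+ n * xv m 0 * hD m n ^+ 2.
Proof. exact: main. Qed.
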